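(* Let $\nu \geq 1$, let $\Psi \neq \emptyset$ be a set, let $n\in\mathbb N$ and let $W_1,\dots,W_n:\Omega \to \ell^\infty(\Psi)$ be arbitrary (not necessarily measurable) maps on a probability space $(\Omega,\Upsilon,P)$. For $1\le i\le j\le n$ and $\psi\in\Psi$ put $S_{i,j}^W(\psi)=\sum_{k=i}^j W_k(\psi)$ and $M_{i,j}^W(\psi)=\max_{k=i,\dots,j}|S_{i,k}^W(\psi)|$. Let $\alpha>1$ and let $g:\mathbb N\to\mathbb R$ be such that the pair $(\alpha,g)$ fulfills condition (S) with some index $Q\in[1,2^{(\alpha-1)/\alpha})$. Suppose that for all $1\le i\le j\le n$, $$\mathrm E^*\Big\{\sup_{\psi\in\Psi}|S_{i,j}^W(\psi)|^\nu\Big\}\le g^{\alpha}(j-i+1).$$ Then there exists a constant $A$ depending only on $\alpha,\nu$ and $Q$ such that for all $1\le i\le j\le n$, $$\mathrm E^*\Big\{\sup_{\psi\in\Psi}|M_{i,j}^W(\psi)|^\nu\Big\}\le A\, g^{\alpha}(j-i+1).$$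
   Context: $\ell^\infty(\Psi)$ is the space of bounded real functions on $\Psi$ with the sup norm. $\mathrm E^*$ denotes outer expectation: for an arbitrary map $Y:\Omega\to\mathbb R$, $\mathrm E^*\{Y\}=\inf\{\mathrm E\{U\}: U\ge Y,\ U:\Omega\to[-\infty,\infty] \text{ measurable},\ \mathrm E\{U\}\text{ exists}\}$. Condition (S): for $\alpha>1$ and $g:\mathbb N\to\mathbb R$, the pair $(\alpha,g)$ fulfills condition (S) with index $Q\in[1,2^{(\alpha-1)/\alpha})$ if (i) $g\ge 0$, (ii) $g$ is nondecreasing, and (iii) for each $1\le i<j$, $g(i)+g(j-i)\le Q\,g(j)$. *)

(* Defs.v *)
From HB Require Import structures.
From mathcomp Require Import all_boot all_order all_algebra.
From mathcomp Require Import all_classical all_reals all_analysis measurable_realfun.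
Set Implicit Arguments. Unset Strict Implicit. Unset Printing Implicit Defensive.
Import Order.TTheory GRing.Theory Num.Theory.
Local Open Scope classical_set_scope.
Local Open Scope ring_scope.

(* Outer expectation E^* {Y} = inf { E U : U >= Y, U measurable into [-oo,oo],
   E U exists (not both E U^+ and E U^- infinite) }. *)
Definition outer_expectation {d} {T : measurableType d} {R : realType}
  (P : probability T R) (Y : T -> R) : \bar R :=
  ereal_inf [set (\int[P]_x U x)%E | U in
    [set U : T -> \bar R | measurable_fun [set: T] U
       /\ (forall x, (Y x)%:E <= U x)%E
       /\ ((\int[P]_x (U^\+ x) < +oo)%E \/ (\int[P]_x (U^\- x) < +oo)%E)]].

(* Condition (S) for (alpha, g) with index Q; g is indexed by N = {1,2,...}. *)
Definition condS {R : realType} (alpha : R) (g : nat -> R) (Q : R) : Prop :=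
  [/\ 1 <= Q /\ Q < 2 `^ ((alpha - 1) / alpha),
      (forall k, (1 <= k)%N -> 0 <= g k),
      (forall k l, (1 <= k <= l)%N -> g k <= g l) &
      (forall i j, (1 <= i < j)%N -> g i + g (j - i)%N <= Q * g j)].

Definition Ssum {R : realType} {T Psi : Type} (W : nat -> T -> Psi -> R)
  (i j : nat) (w : T) (psi : Psi) : R :=
  \sum_(i <= k < j.+1) W k w psi.

Definition Mmax {R : realType} {T Psi : Type} (W : nat -> T -> Psi -> R)
  (i j : nat) (w : T) (psi : Psi) : R :=
  \big[Num.max/0]_(i <= k < j.+1) `|Ssum W i k w psi|.

Definition supnorm_pow {R : realType} {Psi : Type} (F : Psi -> R) (nu : R) : R :=
  sup [set `|F psi| `^ nu | psi in [set: Psi]].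

(* Main.v *)
Require Import Defs.
From HB Require Import structures.
From mathcomp Require Import all_boot all_order all_algebra.
From mathcomp Require Import all_classical all_reals all_analysis measurable_realfun.
From mathcomp Require Import lra ring zify.
Import Order.TTheory GRing.Theory Num.Theory.
Local Open Scope classical_set_scope.
Local Open Scope ring_scope.
Section OE.
Context d (T : measurableType d) (R : realType) (P : probability T R).
Local Notation OE := (outer_expectation P).

Lemma OE_ub (Y : T -> R) (U : T -> \bar R) : measurable_fun setT U ->
  (forall x, (Y x)%:E <= U x)%E -> (forall x, 0 <= U x)%E ->
  (OE Y <= \int[P]_x U x)%E.
Proof.
move=> mU UY U0; apply: ereal_inf_lbound; exists U => //; split => //; split => //.
right; rewrite (eq_integral (cst 0)); first by rewrite integral0.
by move=> x _; apply: (ge0_funenegE (D := setT)) => //; rewrite inE.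
Qed.

Lemma OE_lt (Y : T -> R) (x : \bar R) : (OE Y < x)%E ->
  exists U : T -> \bar R, [/\ measurable_fun setT U,
    (forall w, (Y w)%:E <= U w)%E & (\int[P]_w U w < x)%E].
Proof.
move=> /ereal_inf_lt [z [U [mU [UY _]] <-] Ux].
by exists U.
Qed.

Lemma OE_lb (Y : T -> R) (M : \bar R) :
  (forall U : T -> \bar R, measurable_fun setT U ->
    (forall w, (Y w)%:E <= U w)%E -> (M <= \int[P]_w U w)%E) -> (M <= OE Y)%E.
Proof.
by move=> H; apply: le_ereal_inf_tmp => z [U [mU [UY _]] <-]; apply: H.
Qed.

Lemma OE_le (Y1 Y2 : T -> R) : (forall x, Y1 x <= Y2 x) -> (OE Y1 <= OE Y2)%E.
Proof.
move=> H; apply: le_ereal_inf_tmp => z [U [mU [UY Ui]] <-]; apply: ereal_inf_lbound.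
exists U => //; split => //; split => //.
by move=> w; apply: le_trans (UY w); rewrite lee_fin.
Qed.

Lemma OE_ge0 (Y : T -> R) : (forall x, 0 <= Y x) -> (0 <= OE Y)%E.
Proof.
move=> Y0; apply: OE_lb => U mU UY; apply: integral_ge0 => w _.
by apply: le_trans (UY w); rewrite lee_fin.
Qed.

Lemma OE_cst0 : (OE (fun _ => 0%R) <= 0)%E.
Proof.
rewrite -(integral0 P setT); apply: OE_ub => //.
Qed.

Lemma OE_scale (c : R) (Y : T -> R) : 0 < c -> (forall x, 0 <= Y x) ->
  (OE (fun x => (c * Y x)%R) <= c%:E * OE Y)%E.
Proof.
move=> c0 Y0.
have H : (c^-1%:E * OE (fun x => (c * Y x)%R) <= OE Y)%E.
  apply: OE_lb => U mU UY.
  have U0 : forall w, (0 <= U w)%E by move=> w; apply: le_trans (UY w); rewrite lee_fin.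
  rewrite lee_pdivrMl //.
  rewrite -ge0_integralZl_EFin //; last exact: ltW.
  apply: OE_ub.
  - exact: measurable_funeM.
  - by move=> w; rewrite EFinM lee_pmul2l ?lte_fin.
  - by move=> w; rewrite mule_ge0 // lee_fin ltW.
by rewrite lee_pdivrMl // in H.
Qed.
Lemma OE_add (Y1 Y2 : T -> R) : (forall x, 0 <= Y1 x) -> (forall x, 0 <= Y2 x) ->
  (OE (fun x => (Y1 x + Y2 x)%R) <= OE Y1 + OE Y2)%E.
Proof.
move=> Y10 Y20.
have h1 := @OE_ge0 _ Y10; have h2 := @OE_ge0 _ Y20.
case E1: (OE Y1) h1 => [r1| |] h1 //; last first.
  by rewrite addye ?leey // gt_eqF // (lt_le_trans _ h2) // ltNy0.
case E2: (OE Y2) h2 => [r2| |] h2 //; last by rewrite addey ?leey.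
apply/lee_addgt0Pr => e e0.
have /(@OE_lt Y1) [U1 [mU1 UY1 U1lt]] : (OE Y1 < (r1 + e/2)%:E)%E by rewrite E1 lte_fin; lra.
have /(@OE_lt Y2) [U2 [mU2 UY2 U2lt]] : (OE Y2 < (r2 + e/2)%:E)%E by rewrite E2 lte_fin; lra.
have U10 : forall w, (0 <= U1 w)%E by move=> w; apply: le_trans (UY1 w); rewrite lee_fin.
have U20 : forall w, (0 <= U2 w)%E by move=> w; apply: le_trans (UY2 w); rewrite lee_fin.
apply: le_trans (@OE_ub _ (U1 \+ U2)%E _ _ _) _.
- exact: emeasurable_funD.
- by move=> w; rewrite EFinD; exact: leeD.
- by move=> w; exact: adde_ge0.
rewrite ge0_integralD //; apply: (le_trans (ltW (lteD U1lt U2lt))).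
by rewrite -!EFinD lee_fin; lra.
Qed.
Lemma OE_comb (Y Ya Y1 Y2 : T -> R) (c1 c2 ra r1 r2 : R) : 0 < c1 -> 0 < c2 ->
  (forall x, 0 <= Ya x) -> (forall x, 0 <= Y1 x) -> (forall x, 0 <= Y2 x) ->
  (forall w, Y w <= c1 * Ya w + c2 * (Y1 w + Y2 w)) ->
  (OE Ya <= ra%:E)%E -> (OE Y1 <= r1%:E)%E -> (OE Y2 <= r2%:E)%E ->
  (OE Y <= (c1 * ra + c2 * (r1 + r2))%:E)%E.
Proof.
move=> c10 c20 Ya0 Y10 Y20 HY Ha H1 H2.
apply: le_trans (@OE_le _ _ HY) _.
apply: le_trans (@OE_add _ _ _ _) _.
- by move=> x; rewrite mulr_ge0 // ltW.
- by move=> x; rewrite mulr_ge0 ?addr_ge0 // ltW.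
rewrite EFinD; apply: leeD.
  apply: le_trans (@OE_scale _ _ c10 Ya0) _.
  by rewrite EFinM lee_pmul2l // lte_fin.
apply: le_trans (@OE_scale _ _ c20 _) _; first by move=> x; rewrite addr_ge0.
rewrite EFinM lee_pmul2l ?lte_fin //.
apply: le_trans (@OE_add _ _ Y10 Y20) _.
by rewrite EFinD leeD.
Qed.
End OE.
Section PW.
Context (R : realType) (Psi : Type) (n : nat) (W : nat -> Psi -> R).
Hypothesis HW : forall k, (1 <= k <= n)%N -> exists B : R, forall psi, `|W k psi| <= B.

Definition bnd (F : Psi -> R) := exists B : R, forall psi, `|F psi| <= B.

Lemma bnd_sum (s : seq nat) : (forall k, k \in s -> (1 <= k <= n)%N) ->
  bnd (fun psi => \sum_(k <- s) W k psi).
Proof.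
elim: s => [|a s IH] Hs.
  by exists 0 => psi; rewrite big_nil normr0.
have [B1 H1] := HW a (Hs a (mem_head _ _)).
have [B2 H2] := IH (fun k ks => Hs k (mem_behead (s:=a::s) ks)).
exists (B1 + B2) => psi; rewrite big_cons.
by apply: le_trans (ler_normD _ _) _; apply: lerD.
Qed.

Lemma bnd_max (s : seq nat) (F : nat -> Psi -> R) : (forall k, k \in s -> bnd (F k)) ->
  bnd (fun psi => \big[Num.max/0]_(k <- s) `|F k psi|).
Proof.
elim: s => [|a s IH] Hs.
  by exists 0 => psi; rewrite big_nil normr0.
have [B1 H1] := Hs a (mem_head _ _).
have [B2 H2] := IH (fun k ks => Hs k (mem_behead (s:=a::s) ks)).
exists (B1 + B2) => psi; rewrite big_cons.
have h0 : 0 <= \big[Num.max/0]_(k <- s) `|F k psi| by apply: bigmax_ge_id.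
have hB2 := H2 psi; rewrite ger0_norm // in hB2.
have hB1 := H1 psi.
rewrite ger0_norm; last by rewrite le_max normr_ge0.
rewrite ge_max; apply/andP; split.
  by apply: le_trans hB1 _; rewrite lerDl (le_trans h0).
by apply: le_trans hB2 _; rewrite lerDr (le_trans (normr_ge0 _) hB1).
Qed.

Lemma bnd_Ssum i j : (1 <= i)%N -> (j <= n)%N -> bnd (fun psi => \sum_(i <= k < j.+1) W k psi).
Proof.
move=> i1 jn; apply: bnd_sum => k; rewrite mem_index_iota => /andP[ik kj].
by rewrite (leq_trans i1 ik) /= -ltnS (leq_trans kj).
Qed.
End PW.
Section PW2.
Context (R : realType) (Psi : Type) (W : nat -> Psi -> R).
Let S i j psi := \sum_(i <= k < j.+1) W k psi.
Let M i j psi := \big[Num.max/0]_(i <= k < j.+1) `|S i k psi|.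

Lemma M_ge0 i j psi : 0 <= M i j psi.
Proof. exact: bigmax_ge_id. Qed.

Lemma M_empty i j psi : (j < i)%N -> M i j psi = 0.
Proof. by move=> ji; rewrite /M big_geq. Qed.

Lemma M_split i m j psi : (1 <= i)%N -> (i <= m)%N -> (m <= j)%N ->
  M i j psi <= `|S i m psi| + Num.max (M i m.-1 psi) (M m.+1 j psi).
Proof.
move=> i1 im mj.
have Hmax0 : 0 <= Num.max (M i m.-1 psi) (M m.+1 j psi) by rewrite le_max M_ge0.
rewrite /M big_seq; apply: bigmax_le => [|k]; first by rewrite addr_ge0.
rewrite mem_index_iota => /andP[ik kj].
case: (ltnP k m) => [km|mk].
  apply: le_trans (_ : Num.max (M i m.-1 psi) (M m.+1 j psi) <= _); last by rewrite lerDr.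
  rewrite le_max; apply/orP; left.
  rewrite /M; apply: (le_bigmax_seq 0 k xpredT (fun k => `|S i k psi|)) => //.
  by rewrite mem_index_iota ik /= prednK // (leq_trans i1 im).
have -> : S i k psi = S i m psi + S m.+1 k psi.
  by rewrite /S (@big_cat_nat _ _ _ m.+1) //= (leq_trans im).
apply: le_trans (ler_normD _ _) _; rewrite lerD2l.
rewrite le_max; apply/orP; right.
case: (ltnP m k) => [mk'|km].
  rewrite /M; apply: (le_bigmax_seq 0 k xpredT (fun k => `|S m.+1 k psi|)) => //.
  by rewrite mem_index_iota mk'.
have -> : k = m by apply/eqP; rewrite eqn_leq km mk.
by rewrite /S big_geq // normr0 M_ge0.
Qed.
End PW2.
Lemma conv_pow (R : realType) (p t x y : R) : 1 <= p -> 0 <= t -> t <= 1 -> 0 <= x -> 0 <= y ->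
  (t * x + (1 - t) * y) `^ p <= t * x `^ p + (1 - t) * y `^ p.
Proof.
move=> p1 t0 t1 x0 y0.
have := @convex_powR R p p1 (Itv01 t0 t1) x y.
rewrite !convRE /= !inE /= !in_itv /= !andbT.
by move=> /(_ x0 y0).
Qed.

Lemma pow_split (R : realType) (p mu x y : R) : 1 <= p -> 0 < mu -> mu < 1 -> 0 <= x -> 0 <= y ->
  (x + y) `^ p <= ((1 - mu) * ((1 - mu)^-1) `^ p) * x `^ p + (mu * (mu^-1) `^ p) * y `^ p.
Proof.
move=> p1 m0 m1 x0 y0.
have t0 : 0 < 1 - mu by rewrite subr_gt0.
have := @conv_pow R p (1 - mu) (x / (1 - mu)) (y / mu) p1 (ltW t0) (ltac:(rewrite gerBl; exact: ltW))
  (divr_ge0 x0 (ltW t0)) (divr_ge0 y0 (ltW m0)).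
have -> : 1 - (1 - mu) = mu by rewrite opprB addrCA subrr addr0.
have -> : (1 - mu) * (x / (1 - mu)) = x by rewrite mulrC divfK ?gt_eqF.
have -> : mu * (y / mu) = y by rewrite mulrC divfK ?gt_eqF.
rewrite !powRM ?invr_ge0 ?(ltW t0) ?(ltW m0) //.
move=> H; apply: le_trans H _; apply: lerD; rewrite le_eqVlt; apply/orP; left; apply/eqP.
  by ring.
by ring.
Qed.

Section SUP.
Context (R : realType) (Psi : Type) (psi0 : Psi) (nu : R) (nu1 : 1 <= nu).

Lemma snp_le (F : Psi -> R) c : (forall psi, `|F psi| `^ nu <= c) -> supnorm_pow F nu <= c.
Proof.
move=> H; apply: ge_sup; first by exists (`|F psi0| `^ nu), psi0.
by move=> _ [psi _ <-]; apply: H.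
Qed.

Lemma snp_ge (F : Psi -> R) : (exists B, forall psi, `|F psi| <= B) ->
  forall psi, `|F psi| `^ nu <= supnorm_pow F nu.
Proof.
move=> [B HB] psi; apply: ub_le_sup; last by exists psi.
exists (B `^ nu) => _ [p _ <-]; apply: ge0_ler_powR; rewrite ?nnegrE //.
- by apply: le_trans nu1.
- by apply: le_trans (HB p).
Qed.

Lemma snp_ge0 (F : Psi -> R) : (exists B, forall psi, `|F psi| <= B) -> 0 <= supnorm_pow F nu.
Proof. by move=> H; apply: le_trans (@snp_ge F H psi0); apply: powR_ge0. Qed.
End SUP.
Lemma consts (R : realType) (alpha nu Q : R) : 1 < alpha -> 1 <= nu -> 1 <= Q ->
  Q < 2 `^ ((alpha - 1) / alpha) ->
  exists s mu : R, [/\ 0 < s, s <= Q, s `^ alpha = 2^-1 & Q - s < s] /\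
     [/\ 0 < mu, mu < 1 & (mu * (mu^-1) `^ nu) * (2^-1 + (Q - s) `^ alpha) = mu].
Proof.
move=> a1 n1 Q1 HQ.
have a0 : 0 < alpha by apply: lt_trans a1.
have n0 : 0 < nu by apply: lt_le_trans n1.
pose s := 2 `^ (- alpha^-1).
have s0 : 0 < s by apply: powR_gt0.
have s1 : s <= 1.
  rewrite -(powRr0 2) /s; apply: ler_powR; first by rewrite ler1n.
  by rewrite oppr_le0 invr_ge0 ltW.
have sa : s `^ alpha = 2^-1.
  by rewrite /s -powRrM mulNr mulVf ?gt_eqF // powR_inv1.
have Qs : Q - s < s.
  move: HQ; have -> : (alpha - 1) / alpha = 1 + - alpha^-1.
    by rewrite mulrDl mulfV ?gt_eqF // mulN1r.
  rewrite powRD; last by rewrite pnatr_eq0 implybT.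
  rewrite powRr1 // -/s => HQ; lra.
pose th := 2^-1 + (Q - s) `^ alpha.
have th0 : 0 < th by rewrite /th ltr_pwDl ?powR_ge0 ?invr_gt0.
have th1 : th < 1.
  have : (Q - s) `^ alpha < s `^ alpha.
    apply: gt0_ltr_powR => //; rewrite nnegrE; last exact: ltW.
    by rewrite subr_ge0 (le_trans s1).
  rewrite sa /th => H; lra.
pose mu := th `^ (nu^-1).
have mu0 : 0 < mu by apply: powR_gt0.
have mu1 : mu < 1.
  have -> : (1 : R) = 1 `^ nu^-1 by rewrite powR1.
  rewrite /mu; apply: gt0_ltr_powR; rewrite ?invr_gt0 // nnegrE ltW //.
exists s, mu; split; split => //; first by apply: le_trans s1 Q1.
rewrite -/th; have -> : th = mu `^ nu by rewrite /mu -powRrM mulVf ?gt_eqF // powRr1 // ltW.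
rewrite -mulrA -powRM ?invr_ge0 ?ltW // mulVf ?gt_eqF // powR1 mulr1 //.
Qed.
Lemma final_ineq (R : realType) (c1 c2 mu th hL hl x1 x2 : R) :
  0 <= c1 -> 0 <= c2 -> 0 < mu -> mu < 1 -> c2 * th = mu -> 0 <= hL -> hl <= hL ->
  x1 + x2 <= th * hL ->
  c1 * hl + c2 * ((1 + c1 / (1 - mu)) * x1 + (1 + c1 / (1 - mu)) * x2) <= (1 + c1 / (1 - mu)) * hL.
Proof.
move=> c10 c20 m0 m1 cth hL0 hlL x12.
set A := 1 + c1 / (1 - mu).
have A0 : 0 <= A by rewrite addr_ge0 // divr_ge0 // subr_ge0 ltW.
have eA : A * (1 - mu) = 1 - mu + c1.
  by rewrite /A mulrDl mul1r divfK // subr_eq0 gt_eqF.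
have e1 : c2 * (A * x1 + A * x2) = A * (c2 * (x1 + x2)) by ring.
rewrite e1.
have h1 : c2 * (x1 + x2) <= mu * hL by rewrite -cth -mulrA ler_wpM2l.
have h2 : A * (c2 * (x1 + x2)) <= A * (mu * hL) by rewrite ler_wpM2l.
have h3 : c1 * hl <= c1 * hL by rewrite ler_wpM2l.
have h4 : 0 <= (1 - mu) * hL by rewrite mulr_ge0 // subr_ge0 ltW.
nra.
Qed.

Lemma split_pt (R : realType) (h : nat -> R) (L : nat) : exists l,
  [/\ (l <= L.-1)%N, (l = 0%N \/ h l <= h L / 2) & (l = L.-1 \/ h L / 2 < h l.+1)].
Proof.
suff : forall k, exists l, [/\ (l <= k)%N, (l = 0%N \/ h l <= h L / 2) & (l = k \/ h L / 2 < h l.+1)].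
  by move/(_ L.-1).
elim => [|k [l [lk H1 H2]]]; first by exists 0%N; split => //; left.
case: (leP (h k.+1) (h L / 2)) => Hk.
  by exists k.+1; split => //; [right|left].
exists l; split => //; first by apply: leq_trans lk _.
case: H2 => [->|]; by right.
Qed.
Lemma nf1 i j l : (l <= j - i)%N -> (l < j - i + 1)%N.
Proof. lia. Qed.
Lemma nf2 i l : (0 < l)%N -> (i <= (i + l).-1)%N.
Proof. lia. Qed.
Lemma nf4 i l : (0 < l)%N -> ((i + l).-1 - i + 1 = l)%N.
Proof. lia. Qed.
Lemma nf5 i j l : (i <= j)%N -> (l < j - i)%N ->
  [/\ (j - (i + l) < j - i + 1)%N, ((i + l).+1 <= j)%N, (j - (i + l).+1 + 1 = j - (i + l))%N,
      (1 <= j - (i + l))%N & ((j - i + 1) - l.+1 = j - (i + l))%N] /\ (0 < l.+1 < j - i + 1)%N.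
Proof. move=> ij lj; split; [split|]; lia. Qed.
Lemma nf6 i j l : (l <= j - i)%N -> ~~ (l < j - i)%N -> (j < (i + l).+1)%N.
Proof. lia. Qed.
Lemma nf7 i : (0 < i)%N -> ((i + 0).-1 < i)%N.
Proof. lia. Qed.
Theorem proposition2p1 (R : realType) (alpha nu Q : R) :
  1 < alpha -> 1 <= nu ->
  exists A : R,
  forall (d : measure_display) (T : measurableType d) (P : probability T R)
    (Psi : Type) (Psi_ne : Psi) (n : nat) (W : nat -> T -> Psi -> R) (g : nat -> R),
    (* each W_k(omega) lies in l^infty(Psi) *)
    (forall k w, (1 <= k <= n)%N -> exists B : R, forall psi, `|W k w psi| <= B) ->
    condS alpha g Q ->
    (forall i j, (1 <= i)%N -> (i <= j)%N -> (j <= n)%N ->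
       (outer_expectation P (fun w => supnorm_pow (Ssum W i j w) nu)
          <= (g (j - i + 1)%N `^ alpha)%:E)%E) ->
    forall i j, (1 <= i)%N -> (i <= j)%N -> (j <= n)%N ->
       (outer_expectation P (fun w => supnorm_pow (Mmax W i j w) nu)
          <= (A * g (j - i + 1)%N `^ alpha)%:E)%E.
Proof.
move=> a1 n1.
have [HQ|HQ] := boolP ((1 <= Q) && (Q < 2 `^ ((alpha - 1) / alpha))); last first.
  exists 0 => d T P Psi psi0 n W g _ [[Q1 Q2] _ _ _].
  by move: HQ; rewrite Q1 Q2.
case/andP: HQ => Q1 HQ.
have [s [mu [[s0 sQ sa Qs] [mu0 mu1 cth]]]] := @consts R alpha nu Q a1 n1 Q1 HQ.
set c1 := (1 - mu) * ((1 - mu)^-1) `^ nu.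
set c2 := mu * (mu^-1) `^ nu.
set th := 2^-1 + (Q - s) `^ alpha in cth.
have c10 : 0 < c1 by rewrite mulr_gt0 ?subr_gt0 // powR_gt0 // invr_gt0 subr_gt0.
have c20 : 0 < c2 by rewrite mulr_gt0 // powR_gt0 // invr_gt0.
exists (1 + c1 / (1 - mu)).
move=> d T P Psi psi0 n W g HW [_ g0 gmon gS] Hyp.
have a0 : 0 < alpha by apply: lt_trans a1.
have n0 : 0 < nu by apply: lt_le_trans n1.
pose h k := g k `^ alpha.
have bS : forall w i j, (1 <= i)%N -> (j <= n)%N ->
    exists B, forall psi, `|Ssum W i j w psi| <= B.
  move=> w i j i1 jn.
  exact: (@bnd_Ssum R Psi n (fun k => W k w) (fun k hk => HW k w hk) i j i1 jn).
have bM : forall w i j, (1 <= i)%N -> (j <= n)%N ->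
    exists B, forall psi, `|Mmax W i j w psi| <= B.
  move=> w i j i1 jn.
  apply: (@bnd_max R Psi (index_iota i j.+1) (fun k => Ssum W i k w)) => k.
  rewrite mem_index_iota => /andP[_ kj]; apply: bS => //.
  by apply: leq_trans jn.
have hge0 : forall k, 0 <= h k by move=> k; apply: powR_ge0.
have gge0 : forall k, (1 <= k)%N -> 0 <= g k by move=> k k1; apply: g0.
have hmono : forall k k', (1 <= k)%N -> (k <= k')%N -> h k <= h k'.
  move=> k k' k1 kk'; apply: ge0_ler_powR.
  - exact: ltW.
  - by rewrite nnegrE; apply: gge0.
  - by rewrite nnegrE; apply: gge0; apply: leq_trans k1 kk'.
  - by apply: gmon; rewrite k1 kk'.
have claim : forall L i j, (1 <= i)%N -> (i <= j)%N -> (j <= n)%N -> (j - i + 1)%N = L ->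
    (outer_expectation P (fun w => supnorm_pow (Mmax W i j w) nu)
       <= ((1 + c1 / (1 - mu)) * h L)%:E)%E.
  elim/ltn_ind => L IH i j i1 ij jn HL.
  have [l [lL Hl1 Hl2]] := @split_pt R h L.
  have HL1 : L.-1 = (j - i)%N by rewrite -HL addn1.
  rewrite HL1 in lL Hl2.
  pose m := (i + l)%N.
  have im : (i <= m)%N by rewrite leq_addr.
  have mj : (m <= j)%N by rewrite /m -(subnKC ij) leq_add2l.
  have m1 : (1 <= m)%N by apply: leq_trans i1 im.
  have Ha : (outer_expectation P (fun w => supnorm_pow (Ssum W i m w) nu) <= (h L)%:E)%E.
    apply: le_trans (Hyp i m i1 im (leq_trans mj jn)) _.
    rewrite lee_fin; apply: hmono; first by rewrite addn1.
    by rewrite -HL leq_add2r leq_sub2r.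
  have Hb1 : exists x1, [/\ 0 <= x1, x1 <= h L / 2 &
     (outer_expectation P (fun w => supnorm_pow (Mmax W i m.-1 w) nu)
        <= ((1 + c1 / (1 - mu)) * x1)%:E)%E].
    case: (posnP l) => [l0|l0].
      exists 0; split => //; first by rewrite divr_ge0.
      rewrite mulr0; apply: le_trans (@OE_cst0 _ _ _ P).
      apply: OE_le => w; apply: (@snp_le R Psi psi0 nu) => psi.
      have -> : Mmax W i m.-1 w psi = 0.
        by apply: (@M_empty R Psi (fun k => W k w)); rewrite /m l0 nf7.
      by rewrite normr0 powR0 // gt_eqF.
    exists (h l); split => //.
      by case: Hl1 => [l0'|//]; rewrite l0' in l0.
    apply: (IH l); first by rewrite -HL nf1.
    - exact: i1.
    - exact: nf2.
    - by apply: leq_trans (leq_pred _) (leq_trans mj jn).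
    - exact: nf4.
  have Hb2 : exists x2, [/\ 0 <= x2, x2 <= (Q - s) `^ alpha * h L &
     (outer_expectation P (fun w => supnorm_pow (Mmax W m.+1 j w) nu)
        <= ((1 + c1 / (1 - mu)) * x2)%:E)%E].
    have [lji|lji] := boolP (l < j - i)%N; last first.
      exists 0; split => //; first by rewrite mulr_ge0 ?powR_ge0.
      rewrite mulr0; apply: le_trans (@OE_cst0 _ _ _ P).
      apply: OE_le => w; apply: (@snp_le R Psi psi0 nu) => psi.
      have -> : Mmax W m.+1 j w psi = 0.
        by apply: (@M_empty R Psi (fun k => W k w)); rewrite /m nf6.
      by rewrite normr0 powR0 // gt_eqF.
    have [[N1 N2 N3 N4 N5] N6] := @nf5 i j l ij lji.
    have Hlt : h L / 2 < h l.+1.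
      by case: Hl2 => // lE; rewrite lE ltnn in lji.
    have gL0 : 0 <= g L by apply: gge0; rewrite -HL addn1.
    have sg : s * g L < g l.+1.
      rewrite ltNge; apply/negP => H.
      move: Hlt; rewrite ltNge => /negP; apply.
      apply: le_trans (_ : (s * g L) `^ alpha <= _).
        apply: ge0_ler_powR => //; first exact: ltW.
          by rewrite nnegrE; apply: gge0.
        by rewrite nnegrE mulr_ge0 // ltW.
      by rewrite (powRM _ (ltW s0) gL0) sa mulrC.
    have gS' := gS l.+1 L; rewrite -HL N6 N5 in gS'.
    have gjm0 : 0 <= g (j - m)%N by apply: gge0.
    have Qs0 : 0 <= Q - s by rewrite subr_ge0.
    exists (h (j - m)%N); split => //.
      rewrite /h -powRM //; apply: ge0_ler_powR => //; first exact: ltW.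
        by rewrite nnegrE mulr_ge0.
      have := gS' isT; rewrite -HL => H.
      rewrite mulrBl; move: H; rewrite /m HL => H; lra.
    apply: (IH (j - m)%N); first by rewrite -HL.
    - by [].
    - exact: N2.
    - exact: jn.
    - exact: N3.
  have Hpw : forall w, supnorm_pow (Mmax W i j w) nu <=
      c1 * supnorm_pow (Ssum W i m w) nu +
      c2 * (supnorm_pow (Mmax W i m.-1 w) nu + supnorm_pow (Mmax W m.+1 j w) nu).
    move=> w; apply: (@snp_le R Psi psi0 nu) => psi.
    have Hs : Mmax W i j w psi <= `|Ssum W i m w psi| +
        Num.max (Mmax W i m.-1 w psi) (Mmax W m.+1 j w psi).
      exact: (@M_split R Psi (fun k => W k w) i m j psi i1 im mj).
    have M0 : forall a b, 0 <= Mmax W a b w psi.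
      by move=> a b; exact: (@M_ge0 R Psi (fun k => W k w)).
    have e1 : (Mmax W i m.-1 w psi) `^ nu <= supnorm_pow (Mmax W i m.-1 w) nu.
      have := @snp_ge R Psi nu n1 _ (bM w i m.-1 i1 (leq_trans (leq_pred m) (leq_trans mj jn))) psi.
      by rewrite ger0_norm.
    have e2 : (Mmax W m.+1 j w psi) `^ nu <= supnorm_pow (Mmax W m.+1 j w) nu.
      have := @snp_ge R Psi nu n1 _ (bM w m.+1 j isT jn) psi.
      by rewrite ger0_norm.
    have e0 := @snp_ge R Psi nu n1 _ (bS w i m i1 (leq_trans mj jn)) psi.
    move: Hs e1 e2 e0.
    set x := `|Ssum W i m w psi|.
    set B1 := Mmax W i m.-1 w psi.
    set B2 := Mmax W m.+1 j w psi.
    move=> Hs e1 e2 e0.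
    have x0 : 0 <= x by apply: normr_ge0.
    have mx0 : 0 <= Num.max B1 B2 by rewrite le_max M0.
    rewrite ger0_norm //.
    apply: le_trans (_ : (x + Num.max B1 B2) `^ nu <= _).
      apply: ge0_ler_powR => //; first exact: le_trans n1.
        by rewrite nnegrE.
      by rewrite nnegrE addr_ge0.
    apply: le_trans (@pow_split R nu mu x (Num.max B1 B2) n1 mu0 mu1 x0 mx0) _.
    apply: lerD; first by apply: ler_wpM2l => //; exact: ltW.
    apply: ler_wpM2l; first exact: ltW.
    apply: le_trans (_ : B1 `^ nu + B2 `^ nu <= _); last exact: lerD.
    by rewrite maxEle; case: ifP => _; rewrite ?lerDl ?lerDr powR_ge0.
  have [x1 [x10 x1L Hx1]] := Hb1.
  have [x2 [x20 x2L Hx2]] := Hb2.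
  have nS : forall w, 0 <= supnorm_pow (Ssum W i m w) nu.
    by move=> w; exact: (@snp_ge0 R Psi psi0 nu n1 _ (bS w i m i1 (leq_trans mj jn))).
  have nB1 : forall w, 0 <= supnorm_pow (Mmax W i m.-1 w) nu.
    by move=> w; exact: (@snp_ge0 R Psi psi0 nu n1 _ (bM w i m.-1 i1 (leq_trans (leq_pred m) (leq_trans mj jn)))).
  have nB2 : forall w, 0 <= supnorm_pow (Mmax W m.+1 j w) nu.
    by move=> w; exact: (@snp_ge0 R Psi psi0 nu n1 _ (bM w m.+1 j isT jn)).
  apply: le_trans (@OE_comb _ _ _ P _ _ _ _ c1 c2 _ _ _ c10 c20 nS nB1 nB2 Hpw Ha Hx1 Hx2) _.
  rewrite lee_fin; apply: (@final_ineq R c1 c2 mu th (h L) (h L) x1 x2) => //.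
  - exact: ltW.
  - exact: ltW.
  - by rewrite /th mulrDl; lra.
move=> i j i1 ij jn.
exact: (claim _ i j i1 ij jn erefl).
Qed.
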